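(* Let $p$ be an odd prime, $e\geq 2$, and $N$ cyclic of order $p^e$. Every transitive subgroup of $\mathrm{Hol}(N)$ has an element of order $p^e$.
   Context: $\mathrm{Hol}(N)=N\rtimes\mathrm{Aut}(N)$ acts on $N$ by $(\eta,\alpha)\cdot x=\eta\,\alpha(x)$; a subgroup is transitive if it acts transitively on $N$. *)

(* Defs.v *)
From mathcomp Require Import all_boot all_fingroup.
Set Implicit Arguments.
Unset Strict Implicit.
Unset Printing Implicit Defensive.

(* The holomorph Hol(N) = N ⋊ Aut(N) of a finite group N, where N is the whole
   carrier [set: gT], realized as its (faithful) image in Sym(N): the
   permutations x |-> eta * alpha x with eta in N and alpha in Aut(N). *)
Definition Hol (gT : finGroupType) : {set {perm gT}} :=
  [set s : {perm gT} | [exists eta : gT, exists a in Aut [set: gT],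
                          [forall x : gT, s x == (eta * a x)%g]]].

(* Main.v *)
Require Import Defs.
From mathcomp Require Import all_boot all_fingroup all_solvable.

Module NTh.
From mathcomp Require Import all_algebra ring.

Fixpoint Ssum (m n : nat) : nat := if n is n'.+1 then 1 + m * Ssum m n' else 0.

Lemma SsumD m a b : Ssum m (a + b) = Ssum m a + m ^ a * Ssum m b.
Proof.
elim: a => [|a IH]; first by rewrite add0n expn0 mul1n.
rewrite addSn /= IH expnS; ring.
Qed.

Lemma SsumM m a b : Ssum m (a * b) = Ssum m a * Ssum (m ^ a) b.
Proof.
elim: b => [|b IH]; first by rewrite muln0 /= muln0.
rewrite mulnS SsumD IH /=; ring.
Qed.

Lemma Ssum_exp d n : (1 + d) ^ n = 1 + d * Ssum (1 + d) n.
Proof.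
elim: n => [|n IH]; first by rewrite expn0 /= muln0.
rewrite expnS IH /=; ring.
Qed.

Lemma Ssum_bin d n : exists q, Ssum (1 + d) n = n + d * 'C(n, 2) + d ^ 2 * q.
Proof.
elim: n => [|n [q IH]]; first by exists 0; rewrite /= !muln0.
exists (q + 'C(n, 2) + d * q).
rewrite /= IH binS bin1; ring.
Qed.

Lemma Ssum_p p t : prime p -> odd p -> exists w, Ssum (1 + p * t) p = p * (1 + p * w).
Proof.
move=> pp op.
have [q ->] := Ssum_bin (p * t) p.
have p2 : 2 < p.
  have := prime_gt1 pp; case: p pp op => [|[|[|p]]] //.
have /dvdnP [c hc] : p %| 'C(p, 2) by apply: prime_dvd_bin; rewrite // p2.
exists (t * c + t ^ 2 * q); rewrite hc; ring.
Qed.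

Lemma LTE p t j : prime p -> odd p ->
  exists u, Ssum (1 + p * t) (p ^ j) = p ^ j * (1 + p * u).
Proof.
move=> pp op; elim: j => [|j [u IH]]; first by exists 0; rewrite expn0 /= !muln0.
rewrite expnSr SsumM Ssum_exp !IH.
have -> : p * t * (p ^ j * (1 + p * u)) = p * (t * (p ^ j * (1 + p * u))) by ring.
have [w ->] := Ssum_p p (t * (p ^ j * (1 + p * u))) pp op.
exists (u + w + p * u * w).
ring.
Qed.
End NTh.
Import NTh.

Section Grp.
Local Open Scope group_scope.

Lemma Hol_form (gT : finGroupType) (s : {perm gT}) : cyclic [set: gT] -> s \in Hol gT ->
  exists eta m, forall x, s x = (eta * x ^+ m)%g.
Proof.
case/cyclicP => z Hz.
rewrite inE => /existsP [eta /existsP [a /andP [aA /forallP H]]].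
have: a z \in <[z]> by rewrite -Hz inE.
case/cycleP => m Hm.
exists eta, m => x; rewrite (eqP (H x)); congr (_ * _)%g.
have: x \in <[z]> by rewrite -Hz inE.
case/cycleP => i ->.
have mo := Aut_morphic aA.
have -> : a (z ^+ i)%g = (a z ^+ i)%g.
  by rewrite -(autmE aA) morphX ?inE.
by rewrite Hm -!expgM mulnC.
Qed.

Lemma Hol_iter (gT : finGroupType) (s : {perm gT}) eta m : abelian [set: gT] ->
  (forall x, s x = (eta * x ^+ m)%g) ->
  forall n x, iter n s x = (eta ^+ Ssum m n * x ^+ (m ^ n))%g.
Proof.
move=> cT Hs; elim=> [|n IH] x; first by rewrite /= expg0 mul1g expn0 expg1.
have cxy : forall x y : gT, commute x y.
  by move=> x0 y0; apply: (centsP cT) => //; rewrite inE.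
rewrite iterS IH Hs expgMn // -!expgM mulgA -expgS /= mulnC expnSr.
done.
Qed.

End Grp.

Theorem lemma4p1 (p e : nat) (gT : finGroupType) (G : {group {perm gT}}) :
  prime p -> odd p -> 2 <= e ->
  cyclic [set: gT] -> #|[set: gT]| = p ^ e ->
  G \subset Hol gT ->
  [transitive G, on [set: gT] | 'P] ->
  exists2 g, g \in G & #[g]%g = p ^ e.
Proof.
Local Open Scope group_scope.
move=> pp op e2 cycT cardT sGH trG.
have [z Hz] := cyclicP cycT.
have oz : #[z] = (p ^ e)%N by rewrite /order -Hz cardT.
have cT := cyclic_abelian cycT.
have ordx : forall x : gT, x ^+ (p ^ e) = 1.
  by move=> x; apply/eqP; rewrite -order_dvdn -cardT order_dvdG ?inE.
have [P sylP] := Sylow_exists p G.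
have sPG := pHall_sub sylP.
have pP := pHall_pgroup sylP.
have cardP := card_Hall sylP.
have orbP : orbit 'P P 1 = [set: gT].
  apply/eqP; rewrite eqEcard subsetT cardT.
  have hG := card_orbit_stab 'P G 1.
  rewrite (atransP trG) ?inE // cardT in hG.
  have hP := card_orbit_stab 'P P 1.
  set G1 := 'C_G[1 | 'P] in hG *.
  have sP1 : 'C_P[1 | 'P] \subset 'C_G[1 | 'P] by apply: setSI.
  have pP1 : p.-group 'C_P[1 | 'P] := pgroupS (subsetIl _ _) pP.
  have d1 : #|'C_P[1 | 'P]| %| #|'C_G[1 | 'P]|`_p.
    rewrite -(part_pnat_id pP1); apply: partn_dvd; first exact: cardG_gt0.
    exact: cardSg.
  have l1 := dvdn_leq (part_gt0 _ _) d1.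
  have ep : (#|G|`_p = p ^ e * #|G1|`_p)%N.
    rewrite -hG partnM ?cardG_gt0 ?expn_gt0 ?prime_gt0 // part_pnat_id //.
    by rewrite pnatX pnat_id.
  rewrite cardP ep in hP.
  have g0 := part_gt0 p #|G1|.
  by rewrite /= -(leq_pmul2r g0) -hP leq_mul2l l1 orbT.
have : z \in orbit 'P P 1 by rewrite orbP inE.
case/orbitP => g gP; rewrite /= => g1.
have gH : g \in Hol gT by apply: (subsetP sGH); apply: (subsetP sPG).
have [eta [m Hg]] := @Hol_form _ _ cycT gH.
have eta_z : eta = z by rewrite -g1 /aperm Hg expg1n mulg1.
subst eta.
have Hit := @Hol_iter _ _ _ _ cT Hg.
have [k ok] := p_natP (mem_p_elt pP gP).
have m1 : (m %% p = 1)%N.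
  have hz : (g ^+ #[g]) z = z by rewrite expg_order perm1.
  have h1 : (g ^+ #[g]) 1 = 1 by rewrite expg_order perm1.
  rewrite permX Hit in hz; rewrite permX Hit expg1n mulg1 in h1.
  rewrite h1 mul1g in hz.
  have : z ^+ (m ^ #[g]) == z ^+ 1 by rewrite hz expg1.
  rewrite eq_expg_mod_order oz => /eqP hm.
  have : (m ^ #[g] = 1 %[mod p])%N.
    by rewrite -(modn_dvdm _ (dvdn_exp2l p (ltnW e2))) expn1 hm (modn_dvdm _ (dvdn_exp2l p (ltnW e2))).
  have fk : forall k, (m ^ (p ^ k) = m %[mod p])%N.
    elim=> [|j IH]; first by rewrite expn0 expn1.
    by rewrite expnSr expnM -modnXm IH modnXm fermat_little.
  by rewrite ok fk => ->; apply: modn_small; apply: prime_gt1.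
have hm : m = (1 + p * (m %/ p))%N by rewrite {1}(divn_eq m p) m1 addnC mulnC.
move: (m %/ p) hm => t hm; subst m.
have [u hu] := LTE p t e pp op.
have [v hv] := LTE p t e.-1 pp op.
have ge : g ^+ (p ^ e) = 1.
  apply/permP => x; rewrite permX Hit perm1 hu Ssum_exp hu.
  rewrite expgM ordx expg1n mul1g expgD expg1 mulnCA expgM ordx expg1n mulg1.
  done.
have od : #[g] %| p ^ e by rewrite order_dvdn ge.
have pe : (p ^ e = p ^ e.-1 * p)%N by rewrite -expnSr prednK // ltnW.
have gne : g ^+ (p ^ e.-1) != 1.
  apply/negP => /eqP h.
  have : (g ^+ (p ^ e.-1)) 1 = 1 by rewrite h perm1.
  rewrite permX Hit expg1n mulg1 hv => /eqP; rewrite -order_dvdn oz pe.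
  rewrite dvdn_pmul2l ?expn_gt0 ?prime_gt0 // dvdn_addl ?dvdn_mulr // dvdn1.
  by move=> /eqP p1; rewrite p1 in pp.
case/(dvdn_pfactor _ _ pp): od => j lj oj.
exists g; first exact: (subsetP sPG g gP).
rewrite oj; congr (p ^ _)%N; apply/eqP; rewrite eqn_leq lj /= leqNgt; apply/negP => hj.
move: gne; rewrite -order_dvdn oj dvdn_exp2l //.
by rewrite -ltnS prednK // ltnW.
Qed.
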